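(* For every integer $n\ge 0$, $${}_3F_2\!\left(\begin{matrix}-2n,\,-2n-1,\,\tfrac12\\ -2n+\tfrac12,\,2\end{matrix};1\right)=\frac{(2n+1)!\,(2n)!^3}{(4n)!\,n!^3\,(n+1)!},$$ and $${}_3F_2\!\left(\begin{matrix}-2n-1,\,-2n-2,\,\tfrac12\\ -2n-\tfrac12,\,2\end{matrix};1\right)=0.$$
   Context: ${}_3F_2\!\left(\begin{matrix}a_1,a_2,a_3\\ b_1,b_2\end{matrix};z\right)=\sum_{j\ge0}\frac{(a_1)_j(a_2)_j(a_3)_j}{(b_1)_j(b_2)_j}\frac{z^j}{j!}$, where $(x)_j=x(x+1)\cdots(x+j-1)$ is the Pochhammer symbol; when $a_1=-m$ is a nonpositive integer the series terminates at $j=m$. *)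

(* Defs.v *)
From HB Require Import structures.
From mathcomp Require Import all_boot all_order all_algebra.
Set Implicit Arguments. Unset Strict Implicit. Unset Printing Implicit Defensive.
Import Order.TTheory GRing.Theory Num.Theory.
Local Open Scope ring_scope.

Definition poch (R : pzRingType) (x : R) (j : nat) : R :=
  \prod_(i < j) (x + i%:R).

(* Terminating 3F2 with upper parameter a1 = -m (m : nat): the sum over
   j = 0..m of (a1)_j (a2)_j (a3)_j / ((b1)_j (b2)_j) z^j / j!. *)
Definition hyp3F2_term (F : fieldType) (m : nat) (a2 a3 b1 b2 z : F) : F :=
  \sum_(j < m.+1)
     poch (- m%:R) j * poch a2 j * poch a3 j / (poch b1 j * poch b2 j)
       * z ^+ j / (j`!)%:R.

(* Main.v *)
Require Import Defs.
From HB Require Import structures.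
From mathcomp Require Import all_boot all_order all_algebra.
From mathcomp Require Import ring lra zify.
Import Order.TTheory GRing.Theory Num.Theory.
Local Open Scope ring_scope.

Lemma pochR (R : pzRingType) (x : R) j : poch x j.+1 = poch x j * (x + j%:R).
Proof. by rewrite /poch big_ord_recr. Qed.

Lemma pochL (R : pzRingType) (x : R) j : poch x j.+1 = x * poch (x + 1) j.
Proof.
rewrite /poch big_ord_recl addr0; congr (_ * _); apply: eq_bigr => i _.
by rewrite lift0 -natr1 [_%:R + 1]addrC addrA.
Qed.

Lemma poch2 (R : comPzRingType) (x : R) j :
  poch x j * ((x + j%:R) * (x + j%:R + 1)) = x * (x + 1) * poch (x + 2) j.
Proof.
have e: poch x j.+2 = poch x j * ((x + j%:R) * (x + j%:R + 1)).
  by rewrite pochR pochR -natr1 mulrA addrA.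
rewrite -e pochL pochL -mulrA -addrA.
by have ->: (1 + 1 : R) = 2 by [].
Qed.

Lemma half_neq0 (a b : nat) : a%:R - b%:R + 1/2 != 0 :> rat.
Proof.
apply/eqP => H.
have : (2 * a + 1)%N%:R = (2 * b)%N%:R :> rat.
  have H2 : 2 * (a%:R - b%:R + 1/2) = 0 :> rat by rewrite H mulr0.
  rewrite natrD !natrM; apply/eqP; rewrite -subr_eq0; apply/eqP; rewrite -H2.
  by field.
move/eqP; rewrite eqr_nat => /eqP; lia.
Qed.

Definition t (m j : nat) : rat :=
  poch (- m%:R) j * poch (- m%:R - 1) j * poch (1 / 2) j /
    (poch (- m%:R + 1 / 2) j * poch 2 j) * 1 ^+ j / (j`!)%:R.

Lemma poch_neq0 (x : rat) j : (forall i, (i < j)%N -> x + i%:R != 0) -> poch x j != 0.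
Proof.
elim: j => [|j IH] H; first by rewrite /poch big_ord0 oner_neq0.
rewrite pochR mulf_neq0 //; first by apply: IH => i Hi; apply: H; lia.
by apply: H.
Qed.

Lemma pochh_neq0 m j : poch (- m%:R + 1/2 : rat) j != 0.
Proof.
apply: poch_neq0 => i _.
by rewrite addrC addrA [i%:R + _]addrC [- _ + _]addrC half_neq0.
Qed.

Lemma poch2_neq0 j : poch (2 : rat) j != 0.
Proof.
apply: poch_neq0 => i _.
by rewrite -natrD pnatr_eq0.
Qed.

Lemma fact_neq0 j : (j`!)%:R != 0 :> rat.
Proof. by rewrite pnatr_eq0 -lt0n fact_gt0. Qed.

Lemma t_zero m j : (m < j)%N -> t m j = 0.
Proof.
move=> H; rewrite /t /poch (bigD1 (Ordinal H)) //= addNr !mul0r.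
by [].
Qed.

Lemma tE m j : t m j.+1 = t m j * ((j%:R - m%:R) * (j%:R - m%:R - 1) * (2 * j%:R + 1)
   / ((2 * j%:R + 1 - 2 * m%:R) * (j%:R + 2) * (j%:R + 1))).
Proof.
have h1 := pochh_neq0 m j. have h2 := poch2_neq0 j. have h3 := fact_neq0 j.
have h4 : (2 * j%:R + 1 - 2 * m%:R) != 0 :> rat.
  apply: contra (half_neq0 j m) => /eqP H; apply/eqP.
  have -> : (j%:R - m%:R + 1 / 2 : rat) = (2 * j%:R + 1 - 2 * m%:R) / 2 by field.
  by rewrite H mul0r.
have h5 : (j%:R + 2) != 0 :> rat by rewrite -natrD pnatr_eq0 addn2.
have h6 : (j%:R + 1) != 0 :> rat by rewrite natr1 pnatr_eq0.
rewrite /t !pochR factS natrM -natr1 !expr1n.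
by field; rewrite h6 h5 h4 h3 /=; apply/andP; split.
Qed.

Lemma poch2' (x y : rat) j : y = x + 2 -> x * (x + 1) != 0 ->
  poch y j = poch x j * ((x + j%:R) * (x + j%:R + 1)) / (x * (x + 1)).
Proof. by move=> -> H; rewrite poch2 mulrC mulKf. Qed.

Lemma pos_neq0 (x : rat) : 0 < x -> x != 0.
Proof. by move=> h; rewrite gt_eqF. Qed.

Lemma neg_neq0 (x : rat) : x < 0 -> x != 0.
Proof. by move=> h; rewrite lt_eqF. Qed.

Lemma odd_ne (a b : nat) (y : rat) : y = 2 * a%:R - 2 * b%:R + 1 -> y != 0.
Proof.
move=> ->; apply: contra (half_neq0 a b) => /eqP H; apply/eqP.
have -> : (a%:R - b%:R + 1 / 2 : rat) = (2 * a%:R - 2 * b%:R + 1) / 2 by field.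
by rewrite H mul0r.
Qed.

Lemma tshift m j : t m j = t m.+2 j *
  ((m%:R + 2 - j%:R) * (m%:R + 1 - j%:R) * (m%:R + 3 - j%:R) * (m%:R + 2 - j%:R)
     * (2 * m%:R + 3) * (2 * m%:R + 1)
   / ((m%:R + 2) * (m%:R + 1) * (m%:R + 3) * (m%:R + 2)
     * (2 * j%:R - 2 * m%:R - 3) * (2 * j%:R - 2 * m%:R - 1))).
Proof.
have h0 := ler0n rat m.
have hm1 : m%:R + 1 != 0 :> rat by apply: pos_neq0; lra.
have hm2 : m%:R + 2 != 0 :> rat by apply: pos_neq0; lra.
have hm3 : m%:R + 3 != 0 :> rat by apply: pos_neq0; lra.
have hm4 : 2 * m%:R + 1 != 0 :> rat by apply: pos_neq0; lra.
have hm5 : 2 * m%:R + 3 != 0 :> rat by apply: pos_neq0; lra.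
have hj1 : 2 * j%:R - 2 * m%:R - 3 != 0 :> rat.
  by apply: (@odd_ne j m.+2); rewrite -addn2 natrD; ring.
have hj2 : 2 * j%:R - 2 * m%:R - 1 != 0 :> rat.
  by apply: (@odd_ne j m.+1); rewrite -addn1 natrD; ring.
have em : (m.+2)%:R = m%:R + 2 :> rat by rewrite -addn2 natrD.
rewrite /t em.
rewrite (@poch2' (- (m%:R + 2)) (- m%:R)); last first.
- by apply: pos_neq0; nra.
- by ring.
rewrite (@poch2' (- (m%:R + 2) - 1) (- m%:R - 1)); last first.
- by apply: pos_neq0; nra.
- by ring.
rewrite (@poch2' (- (m%:R + 2) + 1/2) (- m%:R + 1/2)); last first.
- by apply: pos_neq0; nra.
- by ring.
have p1 := pochh_neq0 m.+2 j. rewrite em in p1.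
have p2 := poch2_neq0 j. have p3 := fact_neq0 j.
field; rewrite hj2 hj1 hm2 hm3 hm1 p3 p1 /=.
by repeat (apply/andP; split); try exact: p2; apply: neg_neq0; lra.
Qed.

Definition ge (x y : rat) : rat :=
  y * (- 2 * (x + 1) * (8 * x ^+ 2 + 13 * x + 3) + (1 - 12 * x - 30 * x ^+ 2 - 16 * x ^+ 3) * y
       + 6 * (x + 1) * (2 * x + 1) * y ^+ 2 - (2 * x + 1) * y ^+ 3)
  / (4 * (x + 1) ^+ 2 * (x + 2) * (2 * x + 3) * (2 * y - 4 * x - 3)).

Definition re (x : rat) : rat := 2 * (2 * x + 3) * (2 * x + 1) ^+ 2 / ((4 * x + 3) * (4 * x + 1) * (x + 2)).

Definition sig (M y : rat) : rat :=
  (y - M) * (y - M - 1) * (2 * y + 1) / ((2 * y + 1 - 2 * M) * (y + 2) * (y + 1)).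

Definition rho (m y : rat) : rat :=
  (m + 2 - y) * (m + 1 - y) * (m + 3 - y) * (m + 2 - y) * (2 * m + 3) * (2 * m + 1)
   / ((m + 2) * (m + 1) * (m + 3) * (m + 2) * (2 * y - 2 * m - 3) * (2 * y - 2 * m - 1)).

Lemma key_even (x y : rat) : 0 <= x -> 0 <= y -> 2 * y - 4 * x - 3 != 0 -> 2 * y - 4 * x - 1 != 0 ->
  re x * rho (2 * x) y - 1 = sig (2 * x + 2) y * ge x (y + 1) - ge x y.
Proof.
move=> hx hy h1 h2.
rewrite /re /rho /sig /ge.
field; rewrite h1 /=.
have -> : 2 * (y + 1) - 4 * x - 3 = 2 * y - 4 * x - 1 by ring.
rewrite h2 /=.
by repeat (apply/andP; split); rewrite gt_eqF //; lra.
Qed.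

Definition go (x y : rat) : rat :=
  - (y * ((16 * x ^+ 2 + 42 * x + 23) * (2 * x + 3) + (32 * x ^+ 3 + 108 * x ^+ 2 + 108 * x + 29) * y
       - 12 * (x + 1) * (2 * x + 3) * y ^+ 2 + 4 * (x + 1) * y ^+ 3))
  / (2 * (x + 2) * (2 * x + 3) ^+ 2 * (2 * x + 5) * (2 * y - 4 * x - 5)).

Definition ro (x : rat) : rat := 32 * (x + 1) ^+ 2 * (x + 2) / ((2 * x + 5) * (4 * x + 3) * (4 * x + 5)).

Lemma key_odd (x y : rat) : 0 <= x -> 0 <= y -> 2 * y - 4 * x - 5 != 0 -> 2 * y - 4 * x - 3 != 0 ->
  ro x * rho (2 * x + 1) y - 1 = sig (2 * x + 3) y * go x (y + 1) - go x y.
Proof.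
move=> hx hy h1 h2.
rewrite /ro /rho /sig /go.
field; rewrite h1 /=.
have -> : 2 * (y + 1) - 4 * x - 5 = 2 * y - 4 * x - 3 by ring.
rewrite h2 /=.
by repeat (apply/andP; split); rewrite gt_eqF //; lra.
Qed.


Lemma sum_ext m K : (m < K)%N -> \sum_(j < m.+1) t m j = \sum_(j < K) t m j.
Proof.
move=> H; rewrite -(subnKC H) big_split_ord /= [X in _ = _ + X]big1 ?addr0 // => i _.
apply: t_zero; rewrite /=; lia.
Qed.

Lemma tE' m k : t m k.+1 = t m k * sig m%:R k%:R.
Proof. by rewrite tE. Qed.

Lemma tshift' m k : t m k = t m.+2 k * rho m%:R k%:R.
Proof. by rewrite tshift. Qed.

Lemma step m (c : rat) (g : rat -> rat) :
  g 0 = 0 ->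
  (forall k, (k < m.+3)%N ->
     c * rho m%:R k%:R - 1 = sig (m.+2)%:R k%:R * g (k%:R + 1) - g k%:R) ->
  \sum_(j < m.+3) t m.+2 j = c * \sum_(j < m.+1) t m j.
Proof.
move=> g0 H.
have hm : (m < m.+3)%N by lia.
rewrite (@sum_ext m m.+3 hm) mulr_sumr.
apply/eqP; rewrite eq_sym -subr_eq0 -sumrB; apply/eqP.
rewrite -(big_mkord xpredT (fun j => c * t m j - t m.+2 j)).
rewrite (@telescope_sumr_eq _ 0 m.+3 (fun k => t m.+2 k * g k%:R)) //.
  by rewrite t_zero // mul0r g0 mulr0 subr0.
move=> k /andP [_ hk].
rewrite tshift' tE'.
have -> : (k.+1)%:R = k%:R + 1 :> rat by rewrite -natr1.
rewrite -mulrA -mulrBr -(H k hk).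
ring.
Qed.

Lemma natr2 n : (2 * n)%N%:R = 2 * n%:R :> rat.
Proof. by rewrite natrM. Qed.

Definition E n := \sum_(j < (2 * n).+1) t (2 * n) j.
Definition O n := \sum_(j < (2 * n + 1).+1) t (2 * n + 1) j.

Lemma E_step n : E n.+1 = re n%:R * E n.
Proof.
rewrite /E.
have -> : (2 * n.+1 = (2 * n).+2)%N by lia.
apply: (@step _ (re n%:R) (ge n%:R)); first by rewrite /ge !mul0r.
move=> k hk.
have hx := ler0n rat n. have hy := ler0n rat k.
have e1 : ((2 * n).+2)%:R = 2 * n%:R + 2 :> rat by rewrite -addn2 natrD natrM.
rewrite e1 natr2; apply: key_even => //.
  by apply: (@odd_ne k (2 * n + 2)); rewrite natrD natrM; ring.
by apply: (@odd_ne k (2 * n + 1)); rewrite natrD natrM; ring.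
Qed.

Lemma O_step n : O n.+1 = ro n%:R * O n.
Proof.
rewrite /O.
have -> : (2 * n.+1 + 1 = (2 * n + 1).+2)%N by lia.
apply: (@step _ (ro n%:R) (go n%:R)); first by rewrite /go !(mul0r, oppr0).
move=> k hk.
have hx := ler0n rat n. have hy := ler0n rat k.
have e1 : ((2 * n + 1).+2)%:R = 2 * n%:R + 3 :> rat by rewrite -addn2 -addnA natrD natrM.
have e2 : (2 * n + 1)%N%:R = 2 * n%:R + 1 :> rat by rewrite natrD natrM.
rewrite e1 e2; apply: key_odd => //.
  by apply: (@odd_ne k (2 * n + 3)); rewrite natrD natrM; ring.
by apply: (@odd_ne k (2 * n + 2)); rewrite natrD natrM; ring.
Qed.

Lemma O0 n : O n = 0.
Proof.
elim: n => [|n IH]; last by rewrite O_step IH mulr0.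
rewrite /O /= !big_ord_recr big_ord0 /= /t /poch !big_ord_recr !big_ord0 /=.
have -> : (2 * 0 + 1 = 1)%N by [].
rewrite !expr1n /=.
by field.
Qed.

Definition Fc (n : nat) : rat :=
  ((2 * n + 1)`! * (2 * n)`! ^ 3)%:R / ((4 * n)`! * n`! ^ 3 * n.+1`!)%:R.

Lemma F_step n : Fc n.+1 = re n%:R * Fc n.
Proof.
have a1 : (2 * n.+1 + 1)`! = ((2*n+3) * ((2*n+2) * ((2*n+1) * (2 * n)`!)))%N.
  have -> : (2 * n.+1 + 1 = (2*n).+3)%N by lia.
  rewrite !factS; congr (_ * (_ * (_ * _)))%N; lia.
have a2 : (2 * n.+1)`! = ((2*n+2) * ((2*n+1) * (2 * n)`!))%N.
  have -> : (2 * n.+1 = (2*n).+2)%N by lia.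
  rewrite !factS; congr (_ * (_ * _))%N; lia.
have a3 : (2 * n + 1)`! = ((2*n+1) * (2 * n)`!)%N by rewrite addn1 factS.
have a4 : (4 * n.+1)`! = ((4*n+4) * ((4*n+3) * ((4*n+2) * ((4*n+1) * (4 * n)`!))))%N.
  have -> : (4 * n.+1 = (4*n).+4)%N by lia.
  rewrite !factS; congr (_ * (_ * (_ * (_ * _))))%N; lia.
have a5 : n.+1`! = ((n + 1) * n`!)%N by rewrite addn1 factS.
have a6 : n.+2`! = ((n + 2) * ((n + 1) * n`!))%N by rewrite factS a5 addn2.
rewrite /Fc a1 a2 a3 a4 a5 a6 /re.
have f1 := fact_neq0 (2 * n). have f2 := fact_neq0 (4 * n). have f3 := fact_neq0 n.
have hx := ler0n rat n.
rewrite !(natrM, natrX, natrD).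
field; rewrite f3 f2 /=.
by repeat (apply/andP; split); rewrite gt_eqF //; lra.
Qed.

Lemma E_closed n : E n = Fc n.
Proof.
elim: n => [|n IH]; last by rewrite E_step F_step IH.
rewrite /E /Fc /= big_ord1 /t /poch !big_ord0 /=.
rewrite (_ : ((2*0+1)`! * (2*0)`! ^ 3 = 1)%N) // (_ : ((4*0)`! * 0`! ^ 3 * 1`! = 1)%N) //.
Qed.

Theorem mainTheorem8 (n : nat) :
  hyp3F2_term (F := rat) (2 * n) (- (2 * n)%:R - 1) (1 / 2)
      (- (2 * n)%:R + 1 / 2) 2 1
    = ((2 * n + 1)`! * (2 * n)`! ^ 3)%:R / ((4 * n)`! * n`! ^ 3 * n.+1`!)%:R
  /\
  hyp3F2_term (F := rat) (2 * n + 1) (- (2 * n)%:R - 2) (1 / 2)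
      (- (2 * n)%:R - 1 / 2) 2 1 = 0.
Proof.
split.
  rewrite -[RHS]/(Fc n) -E_closed.
  by [].
have e1 : - (2 * n)%:R - 2 = - (2 * n + 1)%:R - 1 :> rat by rewrite natrD; ring.
have e2 : - (2 * n)%:R - 1 / 2 = - (2 * n + 1)%:R + 1 / 2 :> rat by rewrite natrD; field.
rewrite e1 e2 -(O0 n).
by [].
Qed.
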